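(* Let $V$ be a finite vocabulary. Each word $x\in V$ has a synonym set $S_x\subseteq V$ with $x\in S_x$, the synonym relation being symmetric, and a nonempty perturbation set $P_x\subseteq V$. Fix integers $L\ge1$, $0\le R\le L$, a finite label set $\mathcal{Y}$ with $|\mathcal{Y}|\ge2$, and a classifier $f:V^L\to\mathcal{Y}$. For $X=x_1,\ldots,x_L\in V^L$ let $S_X=\{X'\in V^L: \sum_i\mathbb{I}\{x'_i\ne x_i\}\le R,\ x'_i\in S_{x_i}\ \forall i\}$, let $\Pi_X(Z)=\prod_{i=1}^L\mathbb{I}\{z_i\in P_{x_i}\}/|P_{x_i}|$, let $g^{\mathrm{RS}}(X,c)=\mathbb{P}_{Z\sim\Pi_X}(f(Z)=c)$, and let $f^{\mathrm{RS}}(X)=\arg\max_{c\in\mathcal{Y}}g^{\mathrm{RS}}(X,c)$. Assume $|P_x|=|P_{x'}|$ for every word $x$ and every $x'\in S_x$. Let $q_x=\min_{x'\in S_x}|P_x\cap P_{x'}|/|P_x|$, and for a sentence $X$ order its positions $i_1,\ldots,i_L$ so that $q_{x_{i_1}}\le\cdots\le q_{x_{i_L}}$ and put $q_X=1-\prod_{j=1}^R q_{x_{i_j}}$. For a sentence $X$ and a label $y\in\mathcal{Y}$ define $y_B=\arg\max_{c\in\mathcal{Y},c\ne y}g^{\mathrm{RS}}(X,c)$. If $$\Delta_X:=g^{\mathrm{RS}}(X,y)-g^{\mathrm{RS}}(X,y_B)-2q_X>0,$$ then $f^{\mathrm{RS}}(X')=f^{\mathrm{RS}}(X)=y$ for every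 $X'\in S_X$ (i.e. $y$ is the unique maximizer of $c\mapsto g^{\mathrm{RS}}(X',c)$ for every $X'\in S_X$).
   Context: $f^{\mathrm{RS}}$ is the randomized-smoothing classifier built from the base classifier $f$ by uniformly random word substitutions from the perturbation sets. *)

(* Defs.v *)
From mathcomp Require Import all_boot all_order all_algebra.
Set Implicit Arguments. Unset Strict Implicit. Unset Printing Implicit Defensive.
Import Order.TTheory GRing.Theory Num.Theory.
Local Open Scope ring_scope.

Section RS.
Variables (K : realFieldType) (V Y : finType) (L R : nat).
Variables (S P : V -> {set V}) (f : {ffun 'I_L -> V} -> Y).

Definition inSX (X X' : {ffun 'I_L -> V}) : bool :=
  ((\sum_(i < L) (X' i != X i)) <= R)%N && [forall i, X' i \in S (X i)].

Definition PiX (X Z : {ffun 'I_L -> V}) : K :=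
  \prod_(i < L) ((Z i \in P (X i))%:R / #|P (X i)|%:R).

Definition gRS (X : {ffun 'I_L -> V}) (c : Y) : K :=
  \sum_(Z : {ffun 'I_L -> V} | f Z == c) PiX X Z.

(* q_x = min_{x' in S_x} |P_x cap P_x'| / |P_x|  (all ratios are <= 1,
   and x \in S_x, so the neutral element 1 does not change the minimum) *)
Definition qword (x : V) : K :=
  \big[Num.min/1]_(x' in S x) (#|P x :&: P x'|%:R / #|P x|%:R).

Definition qsent (X : {ffun 'I_L -> V}) : K :=
  let qs := sort (fun a b : K => a <= b) [seq qword (X i) | i <- enum 'I_L] in
  1 - \prod_(j < R) nth 1 qs j.

(* g^RS(X, y_B) = max_{c != y} g^RS(X, c)  (g >= 0 and such c exist) *)
Definition gRS_runnerup (X : {ffun 'I_L -> V}) (y : Y) : K :=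
  \big[Num.max/0]_(c | c != y) gRS X c.

End RS.

(* Main.v *)
Require Import Defs.
From mathcomp Require Import all_boot all_order all_algebra.
Set Implicit Arguments. Unset Strict Implicit. Unset Printing Implicit Defensive.
Import Order.TTheory GRing.Theory Num.Theory.
Local Open Scope ring_scope.

Lemma sorted_prod_le (K : realFieldType) (t : seq K) :
  sorted (fun a b : K => a <= b) t ->
  (forall x, x \in t -> 0 <= x <= 1) ->
  forall (R : nat) (u w : seq K), perm_eq t (u ++ w) -> (size u <= R)%N ->
  \prod_(x <- take R t) x <= \prod_(x <- u) x.
Proof.
elim: t => [|a t IH] Hs H01 R u w Hp Hu.
  have := perm_size Hp; rewrite size_cat /=.
  by case: u Hp Hu => //= _ _ _; rewrite big_nil.
have Hs' : sorted (fun a b : K => a <= b) t by apply: (path_sorted Hs).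
have Hmin : all (fun b => a <= b) t by apply: order_path_min => //; apply: le_trans.
have H01' : forall x, x \in t -> 0 <= x <= 1 by move=> x xt; apply: H01; rewrite inE xt orbT.
have Hu01 : forall x, x \in u -> 0 <= x <= 1.
  by move=> x xu; apply: H01; rewrite (perm_mem Hp) mem_cat xu.
have Hprod01 : forall s : seq K, (forall x, x \in s -> 0 <= x <= 1) -> 0 <= \prod_(x <- s) x <= 1.
  move=> s; elim: s => [|b s IHs] Hb; first by rewrite big_nil ler01 lexx.
  rewrite big_cons; have /andP[b0 b1] := Hb b (mem_head _ _).
  have /andP[p0 p1] := IHs (fun x xs => Hb x ltac:(by rewrite inE xs orbT)).
  by rewrite mulr_ge0 //= mulr_ile1.
case: R Hu => [|k] Hu.
  by move: Hu; rewrite leqn0 size_eq0 => /eqP ->; rewrite take0 !big_nil.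
rewrite /= big_cons.
have /andP[a0 a1] := H01 a (mem_head _ _).
case: (boolP (a \in u)) => au.
  have Pu := perm_to_rem au.
  rewrite (perm_big _ Pu) big_cons /=.
  apply: ler_wpM2l => //.
  apply: (IH Hs' H01' k (rem a u) w).
    by rewrite -(perm_cons a); apply: (perm_trans Hp); rewrite -cat_cons perm_cat2r.
  by rewrite size_rem //; case: (size u) Hu.
case: u Hp Hu au Hu01 => [|b u'] Hp Hu au Hu01.
  rewrite big_nil; have /andP[_ ] := Hprod01 _ H01'.
  move=> _; have /andP[p0 p1] := Hprod01 (take k t) (fun x xt => H01' x (mem_take xt)).
  by rewrite mulr_ile1.
have aw : a \in w.
  by have := perm_mem Hp a; rewrite mem_head mem_cat (negbTE au) /= => <-.
have bt : b \in t.
  have := perm_mem Hp b; rewrite mem_cat mem_head inE => /esym.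
  by move: au; rewrite inE negb_or => /andP[/negbTE ba _]; rewrite eq_sym ba.
have ab : a <= b by move/allP: Hmin; apply.
have Pt : perm_eq t (u' ++ (b :: rem a w)).
  rewrite -(perm_cons a); apply: (perm_trans Hp).
  apply/permP => p; rewrite /= !count_cat /= (permP (perm_to_rem aw)) /=.
  by rewrite !(addnCA (count p u')) addnCA.
rewrite big_cons.
have /andP[b0 b1] := Hu01 b (mem_head _ _).
have Hu'01 : forall x, x \in u' -> 0 <= x <= 1 by move=> x xu; apply: Hu01; rewrite inE xu orbT.
have /andP[p0 p1] := Hprod01 u' Hu'01.
have /andP[q0 q1] := Hprod01 (take k t) (fun x xt => H01' x (mem_take xt)).
apply: (le_trans (y := a * \prod_(x <- u') x)).
  apply: ler_wpM2l => //; apply: (IH Hs' H01' k u' _ Pt); by [].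
by apply: ler_wpM2r.
Qed.

From mathcomp Require Import lra.

Lemma tv_bound (K : realFieldType) (I : finType) (p1 p2 m : I -> K) (q : K) (A : pred I) :
  \sum_i p1 i = 1 -> \sum_i p2 i = 1 ->
  (forall i, m i <= p1 i) -> (forall i, m i <= p2 i) ->
  1 - q <= \sum_i m i ->
  \sum_(i | A i) p1 i - q <= \sum_(i | A i) p2 i.
Proof.
move=> s1 s2 h1 h2 hm.
have e1 : \sum_i p1 i = \sum_(i | A i) p1 i + \sum_(i | ~~ A i) p1 i by apply: bigID.
have e2 : \sum_i m i = \sum_(i | A i) m i + \sum_(i | ~~ A i) m i by apply: bigID.
rewrite s1 in e1; rewrite e2 in hm.
have l1 : \sum_(i | A i) m i <= \sum_(i | A i) p2 i by apply: ler_sum => i _.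
have l2 : \sum_(i | ~~ A i) m i <= \sum_(i | ~~ A i) p1 i by apply: ler_sum => i _.
move: e1 l1 l2 hm; rewrite /=.
set a := \sum_(i | A i) p1 i; set b := \sum_(i | ~~ A i) p1 i.
set c := \sum_(i | A i) m i; set d := \sum_(i | ~~ A i) m i.
move=> e1 l1 l2 hm; lra.
Qed.

Lemma sum_prod_ffun (K : realFieldType) (L : nat) (V : finType) (h : 'I_L -> V -> K) :
  \sum_(Z : {ffun 'I_L -> V}) \prod_i h i (Z i) = \prod_i \sum_v h i v.
Proof. by rewrite bigA_distr_bigA. Qed.

Lemma sum_ind (K : realFieldType) (V : finType) (A : {set V}) (n : K) :
  \sum_v (v \in A)%:R / n = #|A|%:R / n.
Proof.
rewrite -mulr_suml; congr (_ * _).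
rewrite (eq_bigr (fun v => if v \in A then 1 else 0)); last by move=> v _; case: (v \in A).
by rewrite -big_mkcond sumr_const.
Qed.

Lemma prod_nth_take (K : realFieldType) (s : seq K) (R : nat) :
  (R <= size s)%N -> \prod_(j < R) nth 1 s j = \prod_(x <- take R s) x.
Proof.
move=> hR; rewrite (big_nth 1) size_takel // big_mkord.
by apply: eq_bigr => j _; rewrite nth_take.
Qed.

Lemma sumPi1 (K : realFieldType) (V : finType) (L : nat) (P : V -> {set V})
  (hP : forall x, P x != set0) (X : {ffun 'I_L -> V}) :
  \sum_Z PiX K P X Z = 1.
Proof.
rewrite /PiX (sum_prod_ffun (fun i v => (v \in P (X i))%:R / #|P (X i)|%:R)); apply: big1 => i _.
rewrite sum_ind divff // pnatr_eq0 -lt0n card_gt0; exact: hP.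
Qed.

Unset Implicit Arguments.

Theorem proposition1 (K : realFieldType) (V Y : finType) (L R : nat)
  (S P : V -> {set V}) (f : {ffun 'I_L -> V} -> Y)
  (hL : (1 <= L)%N) (hR : (R <= L)%N) (hY : (2 <= #|Y|)%N)
  (hSrefl : forall x, x \in S x)
  (hSsym : forall x x', x' \in S x -> x \in S x')
  (hP : forall x, P x != set0)
  (hPcard : forall x x', x' \in S x -> #|P x| = #|P x'|)
  (X : {ffun 'I_L -> V}) (y : Y) :
  gRS K P f X y - gRS_runnerup K P f X y - 2 * qsent K R S P X > 0 ->
  forall X', inSX R S X X' ->
    forall c, c != y -> gRS K P f X' c < gRS K P f X' y.
Proof.
move=> Hpos X' /andP[Hcnt /forallP HS] c cy.
pose n i := #|P (X i)|.
have npos i : (0 < n i)%N by rewrite card_gt0.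
have nK i : (n i)%:R != 0 :> K by rewrite pnatr_eq0 -lt0n.
have hn' i : #|P (X' i)| = n i by rewrite /n (hPcard _ _ (HS i)).
pose m (Z : {ffun 'I_L -> V}) := \prod_(i < L) ((Z i \in P (X i) :&: P (X' i))%:R / (n i)%:R : K).
have Hm1 Z : m Z <= PiX K P X Z.
  apply: ler_prod => i _; rewrite mulr_ge0 ?invr_ge0 ?ler0n //=.
  apply: ler_wpM2r; first by rewrite invr_ge0 ler0n.
  by rewrite in_setI; case: (Z i \in P (X i)); case: (Z i \in P (X' i)).
have Hm2 Z : m Z <= PiX K P X' Z.
  apply: ler_prod => i _; rewrite mulr_ge0 ?invr_ge0 ?ler0n //= hn'.
  apply: ler_wpM2r; first by rewrite invr_ge0 ler0n.
  by rewrite in_setI; case: (Z i \in P (X i)); case: (Z i \in P (X' i)).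
have Hsm : 1 - qsent K R S P X <= \sum_Z m Z.
  rewrite /m (sum_prod_ffun (fun i v => (v \in P (X i) :&: P (X' i))%:R / (n i)%:R)).
  under eq_bigr => i _ do rewrite sum_ind.
  rewrite /qsent opprB addrC subrK prod_nth_take; last by rewrite size_sort size_map size_enum_ord.
  have step1 : \prod_(i | X' i != X i) qword K S P (X i) <=
      \prod_i (#|P (X i) :&: P (X' i)|%:R / (n i)%:R).
    rewrite big_mkcond; apply: ler_prod => i _; case: ifP => hi.
      apply/andP; split.
        rewrite /qword; apply/bigmin_geP; split => [|x' _]; first exact: ler01.
        by rewrite divr_ge0 ?ler0n.
      rewrite /qword; exact: (bigmin_le_cond _ _ (HS i)).
    rewrite (eqP (negbFE hi)) setIid divff; last exact: nK.
    by rewrite lexx ler01.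
  apply: (le_trans _ step1).
  have Hq01 x : 0 <= qword K S P x <= 1.
    apply/andP; split; last exact: bigmin_le_id.
    rewrite /qword; apply/bigmin_geP; split => [|x' _]; first exact: ler01.
    by rewrite divr_ge0 ?ler0n.
  have := @sorted_prod_le K (sort (fun a b : K => a <= b) [seq qword K S P (X i) | i <- enum 'I_L])
    (sort_sorted (@le_total _ K) _) _ R
    [seq qword K S P (X i) | i <- [seq i <- enum 'I_L | X' i != X i]]
    [seq qword K S P (X i) | i <- [seq i <- enum 'I_L | predC (fun i => X' i != X i) i]].
  rewrite big_map big_filter.
  have <- : \prod_(i <- enum 'I_L | X' i != X i) qword K S P (X i) = \prod_(i | X' i != X i) qword K S P (X i).
    by rewrite enumT.
  apply.
  - move=> x; rewrite mem_sort => /mapP[i _ ->]; exact: Hq01.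
  - by rewrite perm_sort -map_cat; apply: perm_map; rewrite perm_sym perm_filterC.
  - rewrite size_map size_filter -sum1_count; apply: leq_trans Hcnt.
    rewrite enumT big_mkcond /=; apply: leq_sum => i _; by case: (X' i != X i).
have T1 := tv_bound (fun Z => f Z == y) (@sumPi1 K _ _ _ hP X) (@sumPi1 K _ _ _ hP X') Hm1 Hm2 Hsm.
have T2 := tv_bound (fun Z => f Z == c) (@sumPi1 K _ _ _ hP X') (@sumPi1 K _ _ _ hP X) Hm2 Hm1 Hsm.
have Hc : gRS K P f X c <= gRS_runnerup K P f X y.
  by rewrite /gRS_runnerup; exact: le_bigmax_cond.
move: T1 T2 Hc Hpos; rewrite /gRS.
set a := \sum_(Z | f Z == y) PiX K P X Z.
set b := \sum_(Z | f Z == y) PiX K P X' Z.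
set a' := \sum_(Z | f Z == c) PiX K P X Z.
set b' := \sum_(Z | f Z == c) PiX K P X' Z.
move=> T1 T2 Hc Hpos; lra.
Qed.
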